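(* Let $c,d>0$ and $g(x)=xF(c,d;c+d;x)$ for $x\in(0,1)$. The function $G(u)=\log g\!\left(\frac{e^u}{1+e^u}\right)$ is concave on $(-\infty,\infty)$ if and only if $\frac1c+\frac1d\ge1$.
   Context: $F(a,b;c;x)$ is the Gaussian hypergeometric function $\sum_{n\ge0}\frac{(a)_n(b)_n}{(c)_n}\frac{x^n}{n!}$ ($|x|<1$), with $(a)_n=a(a+1)\cdots(a+n-1)$, $(a)_0=1$. *)

(* Defs.v *)
From Stdlib Require Import Arith Reals ClassicalEpsilon.
Open Scope R_scope.

Fixpoint poch (a : R) (n : nat) : R :=
  match n with
  | O => 1
  | S k => poch a k * (a + INR k)
  end.

Definition hyp_term (a b c x : R) (n : nat) : R :=
  poch a n * poch b n / poch c n * x ^ n / INR (fact n).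

(* F(a,b;c;x) = sum_{n>=0} hyp_term a b c x n (the sum of the series,
   chosen by classical description; meaningful where the series converges,
   e.g. |x| < 1 with c not a nonpositive integer). *)
Definition hyp2F1 (a b c x : R) : R :=
  epsilon (inhabits 0) (fun l => infinite_sum (hyp_term a b c x) l).

Definition concave_on_R (f : R -> R) : Prop :=
  forall x y t : R, 0 <= t <= 1 ->
    t * f x + (1 - t) * f y <= f (t * x + (1 - t) * y).

(* Main.v *)
Require Import Defs.
From Stdlib Require Import Arith Reals Lra Lia Psatz ClassicalEpsilon FunctionalExtensionality.
Open Scope R_scope.

Definition PS (b : nat -> R) (x : R) : R :=
  epsilon (inhabits 0) (fun l => infinite_sum (fun n => b n * x ^ n) l).

Definition Sp (b : nat -> R) (x : R) (n : nat) : R := sum_f_R0 (fun k => b k * x ^ k) n.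

Lemma geom2_closed : forall x n,
  sum_f_R0 (fun k => INR (S k) * x ^ k) n * (1 - x)^2 =
  1 - INR (S (S n)) * x ^ (S n) + INR (S n) * x ^ (S (S n)).
Proof.
  intros x n; induction n as [|n IH].
  - simpl. ring.
  - rewrite tech5. rewrite Rmult_plus_distr_r, IH.
    rewrite !S_INR. simpl. ring.
Qed.

Lemma geom2 : forall x n, 0 <= x < 1 ->
  sum_f_R0 (fun k => INR (S k) * x ^ k) n <= / (1 - x)^2.
Proof.
  intros x n Hx.
  assert (Hp : 0 < (1 - x)^2) by (apply pow_lt; lra).
  assert (H := geom2_closed x n).
  assert (HX : 0 <= x ^ (S n)) by (apply pow_le; lra).
  assert (Hn : 0 <= INR n) by apply pos_INR.
  assert (Hle : 1 - INR (S (S n)) * x ^ (S n) + INR (S n) * x ^ (S (S n)) <= 1).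
  { rewrite !S_INR. change (x ^ (S (S n))) with (x * x ^ (S n)).
    assert (x * x ^ (S n) <= x ^ (S n)) by nra.
    assert ((INR n + 1) * (x * x ^ (S n)) <= (INR n + 1) * x ^ (S n)) by (apply Rmult_le_compat_l; lra).
    lra. }
  apply Rmult_le_reg_r with ((1-x)^2); auto.
  rewrite Rinv_l by lra. lra.
Qed.

Section PSgen.
Variable b : nat -> R.
Variable M : R.
Hypothesis Hb : forall n, 0 <= b n <= M * INR (S n).

Lemma Sp_growing : forall x, 0 <= x -> Un_growing (Sp b x).
Proof.
  intros x Hx n. unfold Sp. rewrite tech5.
  assert (0 <= b (S n) * x ^ S n).
  { apply Rmult_le_pos. apply Hb. apply pow_le; lra. }
  lra.
Qed.

Lemma Sp_bound : forall x n, 0 <= x < 1 -> Sp b x n <= M * / (1 - x)^2.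
Proof.
  intros x n Hx. unfold Sp.
  apply Rle_trans with (sum_f_R0 (fun k => (INR (S k) * x ^ k) * M) n).
  - apply sum_Rle. intros k _.
    assert (0 <= x ^ k) by (apply pow_le; lra).
    destruct (Hb k). nra.
  - rewrite <- scal_sum.
    assert (0 <= M) by (destruct (Hb 0); simpl in *; lra).
    apply Rmult_le_compat_l; auto. apply geom2; auto.
Qed.

Lemma PS_cv : forall x, 0 <= x < 1 -> Un_cv (Sp b x) (PS b x).
Proof.
  intros x Hx.
  assert (Hex : exists l, infinite_sum (fun n => b n * x ^ n) l).
  { destruct (growing_cv (Sp b x)) as [l Hl].
    - apply Sp_growing; lra.
    - exists (M * / (1 - x)^2). intros r [i ->]. apply Sp_bound; auto.
    - exists l. exact Hl. }
  unfold PS. apply (epsilon_spec (inhabits 0) _ Hex).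
Qed.

End PSgen.
Lemma cv_const : forall c, Un_cv (fun _ => c) c.
Proof. intros c eps He. exists O. intros n _. unfold Rdist. rewrite Rminus_diag, Rabs_R0. lra. Qed.

Lemma cv_shift : forall u l, Un_cv u l -> Un_cv (fun n => u (S n)) l.
Proof. intros u l H eps He. destruct (H eps He) as [N HN]. exists N. intros n Hn. apply HN. lia. Qed.

Lemma lim_le_ev : forall u v l1 l2, Un_cv u l1 -> Un_cv v l2 ->
  (exists N, forall n, (N <= n)%nat -> u n <= v n) -> l1 <= l2.
Proof.
  intros u v l1 l2 Hu Hv [N HN].
  destruct (Rle_or_lt l1 l2) as [H|H]; auto.
  set (e := (l1 - l2)/2).
  assert (He : e > 0) by (unfold e; lra).
  destruct (Hu e He) as [N1 H1]. destruct (Hv e He) as [N2 H2].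
  set (n := (N + N1 + N2)%nat).
  specialize (H1 n ltac:(unfold n; lia)). specialize (H2 n ltac:(unfold n; lia)).
  specialize (HN n ltac:(unfold n; lia)).
  unfold Rdist in *. apply Rabs_def2 in H1. apply Rabs_def2 in H2. unfold e in *. lra.
Qed.

Lemma growing_mono : forall u, Un_growing u -> forall n k, u n <= u (n + k)%nat.
Proof.
  intros u Hu n k. induction k as [|k IH].
  - rewrite Nat.add_0_r. lra.
  - rewrite Nat.add_succ_r. eapply Rle_trans; [apply IH| apply Hu].
Qed.

Definition dcoef (b : nat -> R) (n : nat) : R := INR (S n) * b (S n).

Definition fder (b : nat -> R) (n : nat) (y : R) : R :=
  sum_f_R0 (fun k => b k * (INR k * y ^ pred k)) n.

Lemma fder_S : forall b n y, fder b (S n) y = Sp (dcoef b) y n.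
Proof.
  intros b n y. unfold fder, Sp, dcoef. induction n as [|n IH].
  - simpl. ring.
  - rewrite tech5. rewrite IH. rewrite (tech5 _ n). simpl pred. ring.
Qed.

Lemma Sp_deriv : forall b n y, derivable_pt_lim (fun y => Sp b y n) y (fder b n y).
Proof.
  intros b n y. unfold Sp, fder. induction n as [|n IH].
  - simpl. replace (b 0%nat * (0 * 1)) with 0 by ring.
    apply (derivable_pt_lim_const (b 0%nat * 1)).
  - simpl. apply (derivable_pt_lim_plus (fun y => sum_f_R0 (fun k => b k * y ^ k) n)
       (fun y => b (S n) * (y * y ^ n))); auto.
    apply (derivable_pt_lim_scal (fun y => y * y ^ n)).
    apply (derivable_pt_lim_pow y (S n)).
Qed.

Section PSgen2.
Variable b : nat -> R.
Variable M : R.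
Hypothesis Hb : forall n, 0 <= b n <= M * INR (S n).

Lemma Sp_le_PS : forall x n, 0 <= x < 1 -> Sp b x n <= PS b x.
Proof.
  intros x n Hx. apply (lim_le_ev (fun _ => Sp b x n) (Sp b x)).
  - apply cv_const.
  - apply (PS_cv b M Hb); auto.
  - exists n. intros m Hm. replace m with (n + (m - n))%nat by lia.
    apply growing_mono. apply (Sp_growing b M Hb). lra.
Qed.

Lemma PS_tail : forall y r n, 0 <= y -> y <= r -> r < 1 ->
  PS b y - Sp b y n <= PS b r - Sp b r n.
Proof.
  intros y r n Hy Hyr Hr.
  assert (H : PS b y + Sp b r n <= PS b r + Sp b y n).
  { apply (lim_le_ev (fun m => Sp b y m + Sp b r n) (fun m => Sp b r m + Sp b y n)).
    - apply CV_plus. apply (PS_cv b M Hb); lra. apply cv_const.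
    - apply CV_plus. apply (PS_cv b M Hb); lra. apply cv_const.
    - exists n. intros m Hm. replace m with (n + (m - n))%nat by lia.
      generalize (m - n)%nat. intro k. induction k as [|k IH].
      + rewrite Nat.add_0_r. lra.
      + rewrite Nat.add_succ_r. unfold Sp in *. rewrite !tech5.
        assert (y ^ S (n + k) <= r ^ S (n + k)) by (apply pow_incr; lra).
        assert (0 <= b (S (n + k))) by apply Hb.
        assert (b (S (n + k)) * y ^ S (n + k) <= b (S (n + k)) * r ^ S (n + k))
          by (apply Rmult_le_compat_l; auto).
        lra. }
  lra.
Qed.

End PSgen2.

Lemma PS_le_coef : forall b1 b2 M1 M2 x,
  (forall n, 0 <= b1 n <= M1 * INR (S n)) -> (forall n, 0 <= b2 n <= M2 * INR (S n)) ->
  (forall n, b1 n <= b2 n) -> 0 <= x < 1 -> PS b1 x <= PS b2 x.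
Proof.
  intros b1 b2 M1 M2 x H1 H2 H12 Hx.
  apply Rle_cv_lim with (Un := Sp b1 x) (Vn := Sp b2 x).
  - intro n. unfold Sp. apply sum_Rle. intros k _. apply Rmult_le_compat_r.
    apply pow_le; lra. auto.
  - apply (PS_cv b1 M1 H1 x Hx).
  - apply (PS_cv b2 M2 H2 x Hx).
Qed.

Section PSderiv.
Variable b : nat -> R.
Variable M : R.
Hypothesis Hb : forall n, 0 <= b n <= M.

Lemma Hb_lin : forall n, 0 <= b n <= M * INR (S n).
Proof.
  intro n. destruct (Hb n). split; auto.
  assert (0 <= M) by lra. assert (1 <= INR (S n)) by (rewrite S_INR; generalize (pos_INR n); lra).
  nra.
Qed.

Lemma Hdb_lin : forall n, 0 <= dcoef b n <= M * INR (S n).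
Proof.
  intro n. unfold dcoef. destruct (Hb (S n)).
  assert (0 <= INR (S n)) by apply pos_INR. split; nra.
Qed.

Lemma PS_deriv : forall x, 0 < x < 1 -> derivable_pt_lim (PS b) x (PS (dcoef b) x).
Proof.
  intros x Hx.
  assert (Hd0 : 0 < Rmin x (1 - x)) by (apply Rmin_glb_lt; lra).
  assert (Hd : 0 < Rmin x (1 - x) / 2) by lra.
  set (d := mkposreal _ Hd).
  assert (Hd1 : d <= x / 2) by (simpl; generalize (Rmin_l x (1-x)); lra).
  assert (Hd2 : d <= (1 - x) / 2) by (simpl; generalize (Rmin_r x (1-x)); lra).
  assert (Hdp : 0 < d) by apply cond_pos.
  apply (CVU_derivable (fun n y => Sp b y n) (fder b) (PS b) (PS (dcoef b)) x d).
  - intros eps He.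
    assert (Hr : 0 <= x + d < 1) by lra.
    destruct (PS_cv (dcoef b) M Hdb_lin (x + d) Hr eps He) as [N HN].
    exists (S N). intros n y Hn Hy. unfold Boule in Hy.
    apply Rabs_def2 in Hy.
    destruct n as [|m]; [lia|].
    rewrite fder_S.
    specialize (HN m ltac:(lia)). unfold Rdist in HN. apply Rabs_def2 in HN.
    assert (T1 := PS_tail (dcoef b) M Hdb_lin y (x + d) m ltac:(lra) ltac:(lra) ltac:(lra)).
    assert (T2 := Sp_le_PS (dcoef b) M Hdb_lin y m ltac:(lra)).
    rewrite Rabs_right by lra. lra.
  - intros y Hy. unfold Boule in Hy. apply Rabs_def2 in Hy.
    apply (PS_cv b M Hb_lin). lra.
  - intros n y _. apply Sp_deriv.
  - unfold Boule. rewrite Rminus_diag, Rabs_R0. apply cond_pos.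
Qed.

End PSderiv.
Lemma poch_pos : forall a n, 0 < a -> 0 < poch a n.
Proof.
  intros a n Ha. induction n as [|n IH]; simpl. lra.
  apply Rmult_lt_0_compat; auto. generalize (pos_INR n); lra.
Qed.

Lemma sum_term_le : forall (A : nat -> R) N k, (forall i, 0 <= A i) -> (k <= N)%nat ->
  A k <= sum_f_R0 A N.
Proof.
  intros A N k HA Hk. induction N as [|N IH].
  - replace k with 0%nat by lia. simpl. lra.
  - simpl. destruct (Nat.eq_dec k (S N)) as [->|Hne].
    + assert (0 <= sum_f_R0 A N) by (apply cond_pos_sum; auto). lra.
    + assert (A k <= sum_f_R0 A N) by (apply IH; lia). generalize (HA (S N)); lra.
Qed.

Section Coefs.
Variables c d : R.
Hypothesis hc : 0 < c.
Hypothesis hd : 0 < d.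

Definition acoef (n : nat) : R := poch c n * poch d n / poch (c + d) n / INR (fact n).
Definition ecoef (n : nat) : R := acoef n * ((c + d) / (c + d + INR n)).

Lemma acoef_pos : forall n, 0 < acoef n.
Proof.
  intro n. unfold acoef. apply Rdiv_lt_0_compat. apply Rdiv_lt_0_compat.
  apply Rmult_lt_0_compat; apply poch_pos; auto. apply poch_pos; lra.
  apply lt_0_INR. apply lt_O_fact.
Qed.

Lemma acoef_0 : acoef 0 = 1.
Proof. unfold acoef. simpl. field. Qed.

Lemma acoef_S : forall n, acoef (S n) =
  acoef n * ((c + INR n) * (d + INR n) / ((c + d + INR n) * INR (S n))).
Proof.
  intro n. unfold acoef. simpl poch. rewrite fact_simpl, mult_INR.
  assert (0 < poch (c + d) n) by (apply poch_pos; lra).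
  assert (0 < INR (fact n)) by (apply lt_0_INR; apply lt_O_fact).
  assert (0 <= INR n) by apply pos_INR.
  assert (0 < INR (S n)) by (apply lt_0_INR; lia).
  field. repeat split; lra.
Qed.

Lemma acoef_bound : exists M, forall n, acoef n <= M.
Proof.
  destruct (INR_unbounded (c * d)) as [N0 HN0].
  exists (sum_f_R0 acoef N0). intro n.
  assert (Hpos : forall i, 0 <= acoef i) by (intro; left; apply acoef_pos).
  destruct (le_lt_dec n N0) as [Hle|Hlt].
  - apply sum_term_le; auto.
  - apply Rle_trans with (acoef N0); [| apply sum_term_le; auto].
    replace n with (N0 + (n - N0))%nat by lia. generalize (n - N0)%nat. intro k.
    induction k as [|k IH].
    + rewrite Nat.add_0_r. lra.
    + rewrite Nat.add_succ_r, acoef_S.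
      set (m := (N0 + k)%nat) in *.
      assert (Hm : INR N0 <= INR m) by (apply le_INR; unfold m; lia).
      assert (0 < acoef m) by apply acoef_pos.
      assert (0 < INR (S m)) by (apply lt_0_INR; lia).
      assert (Hr : (c + INR m) * (d + INR m) / ((c + d + INR m) * INR (S m)) <= 1).
      { assert (0 <= INR m) by apply pos_INR.
        apply Rmult_le_reg_r with ((c + d + INR m) * INR (S m)).
        apply Rmult_lt_0_compat; lra.
        unfold Rdiv. rewrite Rmult_assoc, Rinv_l. rewrite S_INR. nra.
        apply Rgt_not_eq. apply Rmult_lt_0_compat; lra. }
      assert (acoef m * ((c + INR m) * (d + INR m) / ((c + d + INR m) * INR (S m))) <= acoef m * 1)
        by (apply Rmult_le_compat_l; lra).
      lra.
Qed.

Definition qq : R := c * d / (c + d).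

Lemma coef_identity : forall n,
  INR (S n) * acoef (S n) = INR n * acoef n + qq * ecoef n.
Proof.
  intro n. rewrite acoef_S. unfold ecoef, qq.
  assert (0 <= INR n) by apply pos_INR.
  assert (0 < INR (S n)) by (apply lt_0_INR; lia).
  rewrite S_INR in *. field. repeat split; lra.
Qed.

Lemma ecoef_bounds : forall n, 0 < ecoef n <= acoef n.
Proof.
  intro n. unfold ecoef. assert (0 < acoef n) by apply acoef_pos.
  assert (0 <= INR n) by apply pos_INR.
  assert (0 < (c + d) / (c + d + INR n)) by (apply Rdiv_lt_0_compat; lra).
  assert ((c + d) / (c + d + INR n) <= 1).
  { apply Rmult_le_reg_r with (c + d + INR n). lra.
    unfold Rdiv. rewrite Rmult_assoc, Rinv_l by lra. lra. }
  split. apply Rmult_lt_0_compat; auto.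
  assert (acoef n * ((c + d) / (c + d + INR n)) <= acoef n * 1) by (apply Rmult_le_compat_l; lra).
  lra.
Qed.

Lemma ecoef_0 : ecoef 0 = 1.
Proof. unfold ecoef. rewrite acoef_0. simpl. field. lra. Qed.

Lemma hyp_PS : forall x, hyp2F1 c d (c + d) x = PS acoef x.
Proof.
  intro x. unfold hyp2F1, PS.
  replace (hyp_term c d (c + d) x) with (fun n => acoef n * x ^ n). reflexivity.
  apply functional_extensionality. intro n. unfold hyp_term, acoef. unfold Rdiv. ring.
Qed.

End Coefs.
Lemma cv_unshift : forall u l, Un_cv (fun n => u (S n)) l -> Un_cv u l.
Proof. intros u l H eps He. destruct (H eps He) as [N HN]. exists (S N). intros n Hn.
  destruct n as [|n]. lia. apply HN. lia. Qed.

Lemma Sp_term_0 : forall b x l, Un_cv (Sp b x) l -> Un_cv (fun n => b n * x ^ n) 0.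
Proof.
  intros b x l H. apply cv_unshift.
  apply Un_cv_ext with (fun n => Sp b x (S n) - Sp b x n).
  - intro n. unfold Sp. rewrite tech5. ring.
  - replace 0 with (l - l) by ring. apply CV_minus; auto. apply cv_shift; auto.
Qed.

Section Ident.
Variables c d : R.
Hypothesis hc : 0 < c.
Hypothesis hd : 0 < d.

Let a := acoef c d.
Let e := ecoef c d.
Let q := qq c d.

Lemma Ma : exists M, forall n, 0 <= a n <= M.
Proof. destruct (acoef_bound c d hc hd) as [M HM]. exists M. intro n. split; auto.
  left; apply acoef_pos; auto. Qed.

Lemma Me : exists M, forall n, 0 <= e n <= M.
Proof. destruct Ma as [M HM]. exists M. intro n. destruct (ecoef_bounds c d hc hd n).
  destruct (HM n). unfold e, a in *. split; lra. Qed.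

Lemma partial_ident : forall x n,
  q * Sp e x n = (1 - x) * Sp (dcoef a) x n + dcoef a n * x ^ (S n).
Proof.
  intros x n. unfold Sp. induction n as [|n IH].
  - simpl. unfold dcoef, a, e, q in *. rewrite (coef_identity c d hc hd 0). simpl. ring.
  - rewrite !tech5. rewrite Rmult_plus_distr_l, IH.
    unfold dcoef, a, e, q in *. rewrite (coef_identity c d hc hd (S n)). simpl. ring.
Qed.

Lemma series_ident : forall x, 0 <= x < 1 ->
  (1 - x) * PS (dcoef a) x = q * PS e x.
Proof.
  intros x Hx. destruct Ma as [M HM]. destruct Me as [Me' HMe].
  assert (Hcv1 := PS_cv (dcoef a) M (Hdb_lin a M HM) x Hx).
  assert (Hcv2 := PS_cv e Me' (Hb_lin e Me' HMe) x Hx).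
  apply UL_sequence with (fun n => q * Sp e x n).
  - apply Un_cv_ext with (fun n => (1 - x) * Sp (dcoef a) x n + x * (dcoef a n * x ^ n)).
    + intro n. rewrite partial_ident. simpl. ring.
    + replace ((1 - x) * PS (dcoef a) x) with ((1 - x) * PS (dcoef a) x + x * 0) by ring.
      apply CV_plus; apply CV_mult; try apply cv_const; auto.
      apply (Sp_term_0 _ _ _ Hcv1).
  - apply CV_mult; auto. apply cv_const.
Qed.

End Ident.
Definition dsum (T : nat -> nat -> R) (m : nat) : R :=
  sum_f_R0 (fun i => sum_f_R0 (fun j => T i j) m) m.

Lemma prod_dsum : forall u v m,
  sum_f_R0 u m * sum_f_R0 v m = dsum (fun i j => u i * v j) m.
Proof.
  intros u v m. unfold dsum. rewrite (Rmult_comm (sum_f_R0 u m)), scal_sum.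
  apply sum_eq. intros i _. rewrite scal_sum. apply sum_eq. intros j _. ring.
Qed.

Lemma swap_rect : forall T n k,
  sum_f_R0 (fun i => sum_f_R0 (fun j => T i j) k) n =
  sum_f_R0 (fun j => sum_f_R0 (fun i => T i j) n) k.
Proof.
  intros T n k. induction n as [|n IH].
  - simpl. reflexivity.
  - simpl. rewrite IH. rewrite <- plus_sum. reflexivity.
Qed.

Lemma dsum_swap : forall T m, dsum T m = dsum (fun i j => T j i) m.
Proof. intros. unfold dsum. apply swap_rect. Qed.

Lemma dsum_plus : forall T1 T2 m, dsum (fun i j => T1 i j + T2 i j) m = dsum T1 m + dsum T2 m.
Proof.
  intros. unfold dsum. rewrite <- plus_sum. apply sum_eq. intros i _. apply plus_sum.
Qed.

Lemma dsum_scal : forall T r m, dsum (fun i j => r * T i j) m = r * dsum T m.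
Proof.
  intros. unfold dsum. rewrite (scal_sum _ m r). apply sum_eq. intros i _.
  rewrite (Rmult_comm _ r), (scal_sum _ m r). apply sum_eq. intros. ring.
Qed.

Lemma dsum_opp : forall T m, - dsum T m = dsum (fun i j => - T i j) m.
Proof.
  intros. replace (- dsum T m) with (-1 * dsum T m) by ring. rewrite <- dsum_scal.
  unfold dsum. apply sum_eq. intros. apply sum_eq. intros. ring.
Qed.

Lemma sum_nonpos : forall A m, (forall i, (i <= m)%nat -> A i <= 0) -> sum_f_R0 A m <= 0.
Proof.
  intros A m H. induction m as [|m IH]; simpl.
  - apply H; lia.
  - assert (sum_f_R0 A m <= 0) by (apply IH; intros; apply H; lia).
    assert (A (S m) <= 0) by (apply H; lia). lra.
Qed.

Lemma dsum_nonpos_sym : forall T m, (forall i j, T i j + T j i <= 0) -> dsum T m <= 0.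
Proof.
  intros T m H.
  assert (dsum (fun i j => T i j + T j i) m <= 0).
  { unfold dsum. apply sum_nonpos. intros i _. apply sum_nonpos. intros j _. apply H. }
  rewrite dsum_plus, <- (dsum_swap T m) in H0. lra.
Qed.

Lemma x_Sp_dcoef : forall b x N,
  x * Sp (dcoef b) x N = sum_f_R0 (fun k => INR k * b k * x ^ k) (S N).
Proof.
  intros b x N. unfold Sp, dcoef. induction N as [|N IH].
  - simpl. ring.
  - rewrite tech5, Rmult_plus_distr_l, IH. rewrite (tech5 _ (S N)). simpl. ring.
Qed.

Section KeyIneq.
Variables c d : R.
Hypothesis hc : 0 < c.
Hypothesis hd : 0 < d.
Hypothesis hp : c * d <= c + d.

Lemma kernel_sym : forall I J, 0 <= I -> 0 <= J ->
  qq c d * (I + 1) * ((c + d) / (c + d + I)) - qq c d * ((c + d) / (c + d + I)) * J - 1 +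
  (qq c d * (J + 1) * ((c + d) / (c + d + J)) - qq c d * ((c + d) / (c + d + J)) * I - 1) <= 0.
Proof.
  intros I J HI HJ. unfold qq.
  set (s := c + d) in *. set (p := c * d) in *.
  assert (Hs : 0 < s) by (unfold s; lra).
  assert (Hp0 : 0 < p) by (unfold p; nra).
  replace (p / s * (I + 1) * (s / (s + I)) - p / s * (s / (s + I)) * J - 1 +
    (p / s * (J + 1) * (s / (s + J)) - p / s * (s / (s + J)) * I - 1))
  with ((p * (2 * s + I + J - (I - J) ^ 2) - 2 * (s + I) * (s + J)) / ((s + I) * (s + J)))
  by (field; repeat split; lra).
  apply Rmult_le_reg_r with ((s + I) * (s + J)). apply Rmult_lt_0_compat; lra.
  unfold Rdiv. rewrite Rmult_assoc, Rinv_l, Rmult_0_l, Rmult_1_r.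
  2: apply Rgt_not_eq; apply Rmult_lt_0_compat; lra.
  assert (0 <= p * (I - J) ^ 2) by (apply Rmult_le_pos; [lra| apply pow2_ge_0]).
  assert (p * (2 * s + I + J) <= s * (2 * s + I + J)) by (apply Rmult_le_compat_r; lra).
  nra.
Qed.

Lemma finite_ineq : forall x m, 0 <= x ->
  qq c d * (sum_f_R0 (fun k => (INR k + 1) * ecoef c d k * x ^ k) m * Sp (acoef c d) x m
     - Sp (ecoef c d) x m * sum_f_R0 (fun k => INR k * acoef c d k * x ^ k) m)
  - Sp (acoef c d) x m ^ 2 <= 0.
Proof.
  intros x m Hx. unfold Sp.
  rewrite !prod_dsum. simpl pow. rewrite Rmult_1_r, prod_dsum.
  set (A := fun k => acoef c d k * x ^ k).
  set (w := fun k => (c + d) / (c + d + INR k)).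
  set (T := fun i j => A i * A j * (qq c d * (INR i + 1) * w i - qq c d * w i * INR j - 1)).
  replace (qq c d * (dsum (fun i j => (INR i + 1) * ecoef c d i * x ^ i * (acoef c d j * x ^ j)) m
    - dsum (fun i j => ecoef c d i * x ^ i * (INR j * acoef c d j * x ^ j)) m)
    - dsum (fun i j => acoef c d i * x ^ i * (acoef c d j * x ^ j)) m) with (dsum T m).
  - apply dsum_nonpos_sym. intros i j. unfold T.
    assert (0 <= A i * A j).
    { unfold A. assert (0 < acoef c d i) by (apply acoef_pos; auto).
      assert (0 < acoef c d j) by (apply acoef_pos; auto).
      assert (0 <= x ^ i) by (apply pow_le; auto). assert (0 <= x ^ j) by (apply pow_le; auto).
      apply Rmult_le_pos; apply Rmult_le_pos; lra. }
    assert (K := kernel_sym (INR i) (INR j) (pos_INR i) (pos_INR j)). fold (w i) (w j) in K.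
    replace (A j * A i) with (A i * A j) by ring.
    rewrite <- Rmult_plus_distr_l.
    nra.
  - unfold Rminus. rewrite !dsum_opp, <- dsum_plus, <- dsum_scal, <- dsum_plus. unfold dsum. apply sum_eq.
    intros i _. apply sum_eq. intros j _. unfold T, A, w, ecoef. ring.
Qed.

End KeyIneq.
Section KeyLim.
Variables c d : R.
Hypothesis hc : 0 < c.
Hypothesis hd : 0 < d.
Hypothesis hp : c * d <= c + d.

Lemma key_ineq : forall x, 0 <= x < 1 ->
  qq c d * ((PS (ecoef c d) x + x * PS (dcoef (ecoef c d)) x) * PS (acoef c d) x
     - PS (ecoef c d) x * (x * PS (dcoef (acoef c d)) x))
  - PS (acoef c d) x * PS (acoef c d) x <= 0.
Proof.
  intros x Hx.
  destruct (Ma c d hc hd) as [M HM]. destruct (Me c d hc hd) as [Me' HMe].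
  assert (CA := PS_cv _ _ (Hb_lin _ _ HM) x Hx).
  assert (CE := PS_cv _ _ (Hb_lin _ _ HMe) x Hx).
  assert (CA' := PS_cv _ _ (Hdb_lin _ _ HM) x Hx).
  assert (CE' := PS_cv _ _ (Hdb_lin _ _ HMe) x Hx).
  set (a := acoef c d) in *. set (e := ecoef c d) in *.
  apply Rle_cv_lim with
    (Un := fun N => qq c d * ((Sp e x (S N) + x * Sp (dcoef e) x N) * Sp a x (S N)
        - Sp e x (S N) * (x * Sp (dcoef a) x N)) - Sp a x (S N) * Sp a x (S N))
    (Vn := fun _ => 0).
  - intro N. simpl.
    assert (H := finite_ineq c d hc hd hp x (S N) ltac:(lra)).
    rewrite <- !x_Sp_dcoef in H.
    replace (sum_f_R0 (fun k => (INR k + 1) * ecoef c d k * x ^ k) (S N))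
      with (Sp e x (S N) + sum_f_R0 (fun k => INR k * ecoef c d k * x ^ k) (S N)) in H.
    + rewrite <- x_Sp_dcoef in H. fold a e in H. simpl pow in H. rewrite Rmult_1_r in H. exact H.
    + unfold Sp. rewrite <- plus_sum. apply sum_eq. intros. unfold e. ring.
  - apply CV_minus.
    + apply CV_mult. apply cv_const.
      apply CV_minus; apply CV_mult.
      * apply CV_plus. apply cv_shift; auto. apply CV_mult; auto. apply cv_const.
      * apply cv_shift; auto.
      * apply cv_shift; auto.
      * apply CV_mult; auto. apply cv_const.
    + apply CV_mult; apply cv_shift; auto.
  - apply cv_const.
Qed.

End KeyLim.
Definition sgm (u : R) : R := exp u / (1 + exp u).

Lemma sgm_range : forall u, 0 < sgm u < 1.
Proof.
  intro u. unfold sgm. assert (0 < exp u) by apply exp_pos. split.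
  apply Rdiv_lt_0_compat; lra.
  apply Rmult_lt_reg_r with (1 + exp u). lra.
  unfold Rdiv. rewrite Rmult_assoc, Rinv_l by lra. lra.
Qed.

Lemma sgm_deriv : forall u, derivable_pt_lim sgm u (sgm u * (1 - sgm u)).
Proof.
  intro u.
  assert (H1 := derivable_pt_lim_plus (fct_cte 1) exp u 0 (exp u)
     (derivable_pt_lim_const 1 u) (derivable_pt_lim_exp u)).
  assert (Hne : (fct_cte 1 + exp)%F u <> 0).
  { unfold plus_fct, fct_cte. generalize (exp_pos u). lra. }
  assert (H2 := derivable_pt_lim_div exp _ u _ _ (derivable_pt_lim_exp u) H1 Hne).
  replace (sgm u * (1 - sgm u)) with
    ((exp u * (fct_cte 1 + exp)%F u - (0 + exp u) * exp u) / Rsqr ((fct_cte 1 + exp)%F u)).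
  exact H2.
  unfold sgm, plus_fct, fct_cte, Rsqr. generalize (exp_pos u). intro. field. lra.
Qed.

Lemma sgm_mono : forall u1 u2, u1 < u2 -> sgm u1 < sgm u2.
Proof.
  intros u1 u2 H. unfold sgm. assert (E := exp_increasing _ _ H).
  assert (0 < exp u1) by apply exp_pos. assert (0 < exp u2) by apply exp_pos.
  apply Rmult_lt_reg_r with ((1 + exp u1) * (1 + exp u2)). nra.
  replace (exp u1 / (1 + exp u1) * ((1 + exp u1) * (1 + exp u2))) with (exp u1 * (1 + exp u2))
    by (field; lra).
  replace (exp u2 / (1 + exp u2) * ((1 + exp u1) * (1 + exp u2))) with (exp u2 * (1 + exp u1))
    by (field; lra).
  nra.
Qed.

Lemma sgm_logit : forall x, 0 < x < 1 -> sgm (ln (x / (1 - x))) = x.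
Proof.
  intros x Hx. unfold sgm. rewrite exp_ln. field. lra.
  apply Rdiv_lt_0_compat; lra.
Qed.

Lemma logit_mono : forall x1 x2, 0 < x1 -> x1 < x2 -> x2 < 1 ->
  ln (x1 / (1 - x1)) < ln (x2 / (1 - x2)).
Proof.
  intros x1 x2 H1 H12 H2. apply ln_increasing. apply Rdiv_lt_0_compat; lra.
  apply Rmult_lt_reg_r with ((1 - x1) * (1 - x2)). nra.
  replace (x1 / (1 - x1) * ((1 - x1) * (1 - x2))) with (x1 * (1 - x2)) by (field; lra).
  replace (x2 / (1 - x2) * ((1 - x1) * (1 - x2))) with (x2 * (1 - x1)) by (field; lra).
  nra.
Qed.

Lemma concave_from_deriv : forall (G D : R -> R),
  (forall u, derivable_pt_lim G u (D u)) ->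
  (forall u1 u2, u1 < u2 -> D u2 <= D u1) -> concave_on_R G.
Proof.
  intros G D HG HD.
  assert (Hlt : forall x y t, x < y -> 0 <= t <= 1 ->
     t * G x + (1 - t) * G y <= G (t * x + (1 - t) * y)).
  { intros x y t Hxy Ht.
    destruct (Req_dec t 0) as [->|Ht0].
    { replace (0 * x + (1 - 0) * y) with y by ring. lra. }
    destruct (Req_dec t 1) as [->|Ht1].
    { replace (1 * x + (1 - 1) * y) with x by ring. lra. }
    set (z := t * x + (1 - t) * y).
    assert (Hxz : x < z) by (unfold z; nra).
    assert (Hzy : z < y) by (unfold z; nra).
    destruct (MVT_cor2 G D x z Hxz (fun c _ => HG c)) as [c1 [E1 Hc1]].
    destruct (MVT_cor2 G D z y Hzy (fun c _ => HG c)) as [c2 [E2 Hc2]].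
    assert (HDc : D c2 <= D c1) by (apply HD; lra).
    assert (Hzx : z - x = (1 - t) * (y - x)) by (unfold z; ring).
    assert (Hyz : y - z = t * (y - x)) by (unfold z; ring).
    assert (t * (G x - G z) + (1 - t) * (G y - G z) <= 0).
    { replace (G x - G z) with (- (D c1 * (z - x))) by lra.
      replace (G y - G z) with (D c2 * (y - z)) by lra.
      rewrite Hzx, Hyz.
      replace (t * - (D c1 * ((1 - t) * (y - x))) + (1 - t) * (D c2 * (t * (y - x))))
        with (t * (1 - t) * (y - x) * (D c2 - D c1)) by ring.
      assert (0 <= t * (1 - t) * (y - x)).
      { apply Rmult_le_pos. apply Rmult_le_pos; lra. lra. }
      nra. }
    lra. }
  intros x y t Ht.
  destruct (Rtotal_order x y) as [Hxy|[Hxy|Hxy]].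
  - apply Hlt; auto.
  - subst y. replace (t * x + (1 - t) * x) with x by ring. lra.
  - assert (H := Hlt y x (1 - t) Hxy ltac:(lra)).
    replace ((1 - t) * y + (1 - (1 - t)) * x) with (t * x + (1 - t) * y) in H by ring.
    lra.
Qed.

Lemma deriv_from_concave : forall (G : R -> R) u1 u2 D1 D2,
  concave_on_R G -> derivable_pt_lim G u1 D1 -> derivable_pt_lim G u2 D2 ->
  u1 < u2 -> D2 <= D1.
Proof.
  intros G u1 u2 D1 D2 HG H1 H2 Hu.
  set (m := (G u2 - G u1) / (u2 - u1)).
  assert (C1 : forall h, 0 < h < u2 - u1 -> m <= (G (u1 + h) - G u1) / h).
  { intros h Hh.
    assert (Hc := HG u2 u1 (h / (u2 - u1))).
    replace (h / (u2 - u1) * u2 + (1 - h / (u2 - u1)) * u1) with (u1 + h) in Hc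
      by (field; lra).
    assert (Ht : 0 <= h / (u2 - u1) <= 1).
    { split. left; apply Rdiv_lt_0_compat; lra.
      apply Rmult_le_reg_r with (u2 - u1). lra.
      unfold Rdiv. rewrite Rmult_assoc, Rinv_l by lra. lra. }
    specialize (Hc Ht). unfold m.
    apply Rmult_le_reg_r with h. lra.
    replace ((G (u1 + h) - G u1) / h * h) with (G (u1 + h) - G u1) by (field; lra).
    replace ((G u2 - G u1) / (u2 - u1) * h) with (h / (u2 - u1) * (G u2 - G u1))
      by (field; lra).
    lra. }
  assert (C2 : forall h, 0 < h < u2 - u1 -> (G (u2 + - h) - G u2) / (- h) <= m).
  { intros h Hh.
    assert (Hc := HG u2 u1 (1 - h / (u2 - u1))).
    replace ((1 - h / (u2 - u1)) * u2 + (1 - (1 - h / (u2 - u1))) * u1) with (u2 + - h) in Hc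
      by (field; lra).
    assert (Ht : 0 <= 1 - h / (u2 - u1) <= 1).
    { assert (h / (u2 - u1) <= 1).
      { apply Rmult_le_reg_r with (u2 - u1). lra.
        unfold Rdiv. rewrite Rmult_assoc, Rinv_l by lra. lra. }
      assert (0 <= h / (u2 - u1)) by (left; apply Rdiv_lt_0_compat; lra). lra. }
    specialize (Hc Ht). unfold m.
    replace ((G (u2 + - h) - G u2) / - h) with ((G u2 - G (u2 + - h)) / h) by (field; lra).
    apply Rmult_le_reg_r with h. lra.
    replace ((G u2 - G (u2 + - h)) / h * h) with (G u2 - G (u2 + - h)) by (field; lra).
    replace ((G u2 - G u1) / (u2 - u1) * h) with (h / (u2 - u1) * (G u2 - G u1))
      by (field; lra).
    lra. }
  assert (L1 : m <= D1).
  { destruct (Rle_or_lt m D1) as [H|H]; auto. exfalso.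
    destruct (H1 (m - D1) ltac:(lra)) as [del Hdel].
    set (h := Rmin (del / 2) ((u2 - u1) / 2)).
    assert (Hdp : 0 < del) by apply cond_pos.
    assert (Hh0 : 0 < h) by (unfold h; apply Rmin_glb_lt; lra).
    assert (Hh1 : h < u2 - u1) by (unfold h; generalize (Rmin_r (del/2) ((u2-u1)/2)); lra).
    assert (Hh2 : h < del) by (unfold h; generalize (Rmin_l (del/2) ((u2-u1)/2)); lra).
    specialize (Hdel h ltac:(lra) ltac:(rewrite Rabs_right; lra)).
    apply Rabs_def2 in Hdel. specialize (C1 h ltac:(lra)). lra. }
  assert (L2 : D2 <= m).
  { destruct (Rle_or_lt D2 m) as [H|H]; auto. exfalso.
    destruct (H2 (D2 - m) ltac:(lra)) as [del Hdel].
    set (h := Rmin (del / 2) ((u2 - u1) / 2)).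
    assert (Hdp : 0 < del) by apply cond_pos.
    assert (Hh0 : 0 < h) by (unfold h; apply Rmin_glb_lt; lra).
    assert (Hh1 : h < u2 - u1) by (unfold h; generalize (Rmin_r (del/2) ((u2-u1)/2)); lra).
    assert (Hh2 : h < del) by (unfold h; generalize (Rmin_l (del/2) ((u2-u1)/2)); lra).
    specialize (Hdel (- h) ltac:(lra) ltac:(rewrite Rabs_left; lra)).
    apply Rabs_def2 in Hdel. specialize (C2 h ltac:(lra)). lra. }
  lra.
Qed.
Section Main.
Variables c d : R.
Hypothesis hc : 0 < c.
Hypothesis hd : 0 < d.

Definition hfun (x : R) : R :=
  1 - x + qq c d * (x * PS (ecoef c d) x / PS (acoef c d) x).

Lemma qq_pos : 0 < qq c d.
Proof. unfold qq. apply Rdiv_lt_0_compat; nra. Qed.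

Lemma F_ge1 : forall x, 0 <= x < 1 -> 1 <= PS (acoef c d) x.
Proof.
  intros x Hx. destruct (Ma c d hc hd) as [M HM].
  assert (H := Sp_le_PS _ _ (Hb_lin _ _ HM) x 0 Hx).
  unfold Sp in H. simpl in H. rewrite acoef_0 in H. lra.
Qed.

Lemma E_ge1 : forall x, 0 <= x < 1 -> 1 <= PS (ecoef c d) x.
Proof.
  intros x Hx. destruct (Me c d hc hd) as [M HM].
  assert (H := Sp_le_PS _ _ (Hb_lin _ _ HM) x 0 Hx).
  unfold Sp in H. simpl in H. rewrite ecoef_0 in H by auto. lra.
Qed.

Lemma E_le_F : forall x, 0 <= x < 1 -> PS (ecoef c d) x <= PS (acoef c d) x.
Proof.
  intros x Hx. destruct (Ma c d hc hd) as [M HM]. destruct (Me c d hc hd) as [M' HM'].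
  apply (PS_le_coef _ _ M' M x (Hb_lin _ _ HM') (Hb_lin _ _ HM)); auto.
  intro n. apply ecoef_bounds; auto.
Qed.

Lemma G_deriv : forall u,
  derivable_pt_lim (fun u => ln (sgm u * PS (acoef c d) (sgm u))) u (hfun (sgm u)).
Proof.
  intro u. destruct (sgm_range u) as [Hs0 Hs1].
  destruct (Ma c d hc hd) as [M HM].
  set (x := sgm u) in *.
  assert (Hg := derivable_pt_lim_mult id (PS (acoef c d)) x _ _ (derivable_pt_lim_id x)
     (PS_deriv _ _ HM x ltac:(lra))).
  assert (H1 := derivable_pt_lim_comp _ _ u _ _ (sgm_deriv u) Hg).
  assert (HF := F_ge1 x ltac:(lra)).
  assert (Hpos : 0 < (comp (mult_fct id (PS (acoef c d))) sgm) u).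
  { unfold comp, mult_fct, id. fold x. nra. }
  assert (H2 := derivable_pt_lim_comp _ _ u _ _ H1 (derivable_pt_lim_ln _ Hpos)).
  replace (hfun x) with
    (/ (comp (mult_fct id (PS (acoef c d))) sgm) u *
     ((1 * PS (acoef c d) x + id x * PS (dcoef (acoef c d)) x) * (sgm u * (1 - sgm u)))).
  - exact H2.
  - unfold comp, mult_fct, id, hfun. fold x.
    assert (Hid := series_ident c d hc hd x ltac:(lra)).
    replace (PS (dcoef (acoef c d)) x) with (qq c d * PS (ecoef c d) x / (1 - x))
      by (rewrite <- Hid; field; lra).
    unfold x. field. fold x. lra.
Qed.

Section Suff.
Hypothesis hp : c * d <= c + d.

Definition hder (x : R) : R :=
  (0 - 1) + qq c d * (((1 * PS (ecoef c d) x + x * PS (dcoef (ecoef c d)) x) * PS (acoef c d) x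
     - PS (dcoef (acoef c d)) x * (x * PS (ecoef c d) x)) / Rsqr (PS (acoef c d) x)).

Lemma h_deriv : forall x, 0 < x < 1 -> derivable_pt_lim hfun x (hder x).
Proof.
  intros x Hx.
  destruct (Ma c d hc hd) as [M HM]. destruct (Me c d hc hd) as [M' HM'].
  assert (HF := F_ge1 x ltac:(lra)).
  assert (D1 := derivable_pt_lim_mult id (PS (ecoef c d)) x _ _ (derivable_pt_lim_id x)
     (PS_deriv _ _ HM' x Hx)).
  assert (Hne : PS (acoef c d) x <> 0) by lra.
  assert (D2 := derivable_pt_lim_div _ _ x _ _ D1 (PS_deriv _ _ HM x Hx) Hne).
  assert (D3 := derivable_pt_lim_scal _ (qq c d) x _ D2).
  assert (D4 := derivable_pt_lim_minus (fct_cte 1) id x _ _ (derivable_pt_lim_const 1 x)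
     (derivable_pt_lim_id x)).
  assert (D5 := derivable_pt_lim_plus _ _ x _ _ D4 D3).
  exact D5.
Qed.

Lemma hder_nonpos : forall x, 0 < x < 1 -> hder x <= 0.
Proof.
  intros x Hx. unfold hder.
  assert (HF := F_ge1 x ltac:(lra)).
  assert (K := key_ineq c d hc hd hp x ltac:(lra)).
  set (F := PS (acoef c d) x) in *. set (E := PS (ecoef c d) x) in *.
  set (E' := PS (dcoef (ecoef c d)) x) in *. set (F' := PS (dcoef (acoef c d)) x) in *.
  unfold Rsqr.
  replace (0 - 1 + qq c d * (((1 * E + x * E') * F - F' * (x * E)) / (F * F)))
    with ((qq c d * ((E + x * E') * F - E * (x * F')) - F * F) / (F * F)) by (field; lra).
  apply Rmult_le_reg_r with (F * F). nra.
  unfold Rdiv. rewrite Rmult_assoc, Rinv_l by nra. lra.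
Qed.

Lemma h_antitone : forall x1 x2, 0 < x1 -> x1 < x2 -> x2 < 1 -> hfun x2 <= hfun x1.
Proof.
  intros x1 x2 H1 H12 H2.
  destruct (MVT_cor2 hfun hder x1 x2 H12 (fun c0 Hc => h_deriv c0 ltac:(lra)))
    as [c0 [E Hc]].
  assert (hder c0 <= 0) by (apply hder_nonpos; lra).
  assert (hder c0 * (x2 - x1) <= 0) by nra.
  lra.
Qed.

Lemma sufficiency : concave_on_R (fun u => ln (sgm u * PS (acoef c d) (sgm u))).
Proof.
  apply concave_from_deriv with (D := fun u => hfun (sgm u)).
  - apply G_deriv.
  - intros u1 u2 Hu. assert (H := sgm_mono _ _ Hu).
    destruct (sgm_range u1). destruct (sgm_range u2).
    apply h_antitone; lra.
Qed.

End Suff.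
End Main.
Section Nec.
Variables c d : R.
Hypothesis hc : 0 < c.
Hypothesis hd : 0 < d.

Lemma F_upper : forall M x, (forall n, 0 <= acoef c d n <= M) -> 0 <= x < 1 ->
  PS (acoef c d) x <= 1 + M * x / (1 - x).
Proof.
  intros M x HM Hx.
  assert (HM0 : 0 <= M) by (destruct (HM 0%nat); lra).
  assert (Hs : forall n, Sp (acoef c d) x n <= 1 + M * (x - x ^ (S n)) / (1 - x)).
  { intro n. induction n as [|n IH].
    - unfold Sp. simpl. rewrite acoef_0. replace (x - x * 1) with 0 by ring.
      unfold Rdiv. rewrite Rmult_0_r, Rmult_0_l. lra.
    - unfold Sp in *. rewrite tech5.
      assert (acoef c d (S n) * x ^ S n <= M * x ^ S n).
      { apply Rmult_le_compat_r. apply pow_le; lra. apply HM. }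
      replace (1 + M * (x - x ^ S (S n)) / (1 - x)) with
        (1 + M * (x - x ^ S n) / (1 - x) + M * x ^ S n).
      lra. simpl. field. lra. }
  apply (lim_le_ev (Sp (acoef c d) x) (fun _ => 1 + M * x / (1 - x))).
  - apply (PS_cv _ M). intro n. destruct (HM n). split; auto.
    assert (1 <= INR (S n)) by (rewrite S_INR; generalize (pos_INR n); lra). nra. auto.
  - apply cv_const.
  - exists O. intros n _. eapply Rle_trans. apply Hs.
    assert (0 <= x ^ S n) by (apply pow_le; lra).
    assert (M * (x - x ^ S n) / (1 - x) <= M * x / (1 - x)).
    { unfold Rdiv. apply Rmult_le_compat_r. left; apply Rinv_0_lt_compat; lra.
      nra. }
    lra.
Qed.

Lemma necessity : concave_on_R (fun u => ln (sgm u * PS (acoef c d) (sgm u))) ->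
  c * d <= c + d.
Proof.
  intro Hconc.
  destruct (Rle_or_lt (c * d) (c + d)) as [H|H]; auto. exfalso.
  assert (Hq : 1 < qq c d).
  { unfold qq. apply Rmult_lt_reg_r with (c + d). lra.
    unfold Rdiv. rewrite Rmult_assoc, Rinv_l by lra. lra. }
  destruct (Ma c d hc hd) as [M HM].
  assert (HM0 : 0 <= M) by (destruct (HM 0%nat); lra).
  set (q := qq c d) in *.
  set (dl := (q - 1) / 2).
  assert (Hdl : 0 < dl) by (unfold dl; lra).
  set (M' := M + 1).
  set (x2 := Rmin (1/2) (dl / (2 * M' * (1 + dl)))).
  assert (Hb : 0 < dl / (2 * M' * (1 + dl))).
  { apply Rdiv_lt_0_compat. lra. unfold M'. apply Rmult_lt_0_compat; lra. }
  assert (Hx2a : 0 < x2) by (unfold x2; apply Rmin_glb_lt; lra).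
  assert (Hx2b : x2 <= 1/2) by (unfold x2; apply Rmin_l).
  assert (Hx2c : x2 <= dl / (2 * M' * (1 + dl))) by (unfold x2; apply Rmin_r).
  set (x1 := x2 / 4).
  assert (HF2 : PS (acoef c d) x2 <= 1 + dl / (1 + dl)).
  { eapply Rle_trans. apply (F_upper M x2 HM). lra.
    assert (M * x2 / (1 - x2) <= 2 * M' * x2).
    { assert (Hy : (1 - x2) * / (1 - x2) = 1) by (apply Rinv_r; lra).
      assert (Hy0 : 0 < / (1 - x2)) by (apply Rinv_0_lt_compat; lra).
      assert (/ (1 - x2) <= 2) by nra.
      unfold Rdiv. unfold M'. assert (0 <= M * x2) by nra. nra. }
    assert (2 * M' * x2 <= dl / (1 + dl)).
    { assert (HM'p : 0 < 2 * M') by (unfold M'; lra).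
      apply Rmult_le_compat_l with (r := 2 * M') in Hx2c; [|lra].
      replace (2 * M' * (dl / (2 * M' * (1 + dl)))) with (dl / (1 + dl)) in Hx2c
        by (field; unfold M' in *; lra).
      lra. }
    lra. }
  assert (HF2p := F_ge1 c d hc hd x2 ltac:(lra)).
  assert (HE2 := E_ge1 c d hc hd x2 ltac:(lra)).
  assert (Hh2 : 1 + dl * x2 <= hfun c d x2).
  { unfold hfun. fold q.
    set (F := PS (acoef c d) x2) in *. set (E := PS (ecoef c d) x2) in *.
    assert (q / F >= 1 + dl).
    { apply Rle_ge. apply Rmult_le_reg_r with F. lra.
      unfold Rdiv. rewrite Rmult_assoc, Rinv_l, Rmult_1_r by lra.
      assert (q = 1 + 2 * dl) by (unfold dl; field).
      assert ((1 + dl) * (1 + dl / (1 + dl)) = 1 + 2 * dl) by (field; lra).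
      assert ((1 + dl) * F <= (1 + dl) * (1 + dl / (1 + dl))) by (apply Rmult_le_compat_l; lra).
      lra. }
    assert (q * (x2 * E / F) >= q * x2 / F).
    { unfold Rdiv. assert (0 < / F) by (apply Rinv_0_lt_compat; lra).
      assert (0 < q) by lra. apply Rle_ge.
      replace (q * x2 * / F) with (q * (x2 * 1 * / F)) by ring.
      apply Rmult_le_compat_l. lra. apply Rmult_le_compat_r. lra.
      apply Rmult_le_compat_l; lra. }
    assert (q * x2 / F = x2 * (q / F)) by (field; lra).
    assert (x2 * (q / F) >= x2 * (1 + dl)).
    { apply Rle_ge. apply Rmult_le_compat_l; lra. }
    lra. }
  assert (Hh1 : hfun c d x1 <= 1 + (q - 1) * x1).
  { unfold hfun. fold q.
    assert (HF1 := F_ge1 c d hc hd x1 ltac:(unfold x1; lra)).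
    assert (HEF := E_le_F c d hc hd x1 ltac:(unfold x1; lra)).
    set (F := PS (acoef c d) x1) in *. set (E := PS (ecoef c d) x1) in *.
    assert (E / F <= 1).
    { apply Rmult_le_reg_r with F. lra. unfold Rdiv.
      rewrite Rmult_assoc, Rinv_l by lra. lra. }
    assert (x1 * E / F = x1 * (E / F)) by (unfold Rdiv; ring).
    assert (x1 * (E / F) <= x1) by (assert (0 < x1) by (unfold x1; lra); nra).
    assert (q * (x1 * E / F) <= q * x1) by (apply Rmult_le_compat_l; lra).
    lra. }
  assert (Hlt : hfun c d x1 < hfun c d x2).
  { assert ((q - 1) * x1 = dl * x2 / 2) by (unfold x1, dl; field).
    assert (0 < dl * x2) by nra. lra. }
  set (u1 := ln (x1 / (1 - x1))). set (u2 := ln (x2 / (1 - x2))).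
  assert (Hu : u1 < u2) by (apply logit_mono; unfold x1; lra).
  assert (Hs1 : sgm u1 = x1) by (apply sgm_logit; unfold x1; lra).
  assert (Hs2 : sgm u2 = x2) by (apply sgm_logit; lra).
  assert (Hd := deriv_from_concave _ u1 u2 _ _ Hconc (G_deriv c d hc hd u1) (G_deriv c d hc hd u2) Hu).
  rewrite Hs1, Hs2 in Hd. lra.
Qed.

End Nec.

Theorem mainTheorem5 (c d : R) (hc : 0 < c) (hd : 0 < d) :
  let g := fun x : R => x * hyp2F1 c d (c + d) x in
  let G := fun u : R => ln (g (exp u / (1 + exp u))) in
  concave_on_R G <-> 1 / c + 1 / d >= 1.
Proof.
  intros g G.
  assert (HG : forall u, G u = ln (sgm u * PS (acoef c d) (sgm u))).
  { intro u. unfold G, g, sgm. rewrite hyp_PS; auto. }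
  assert (Heq : 1 / c + 1 / d >= 1 <-> c * d <= c + d).
  { replace (1 / c + 1 / d) with ((c + d) / (c * d)) by (field; lra).
    assert (Hp : 0 < c * d) by nra.
    split; intro H.
    - apply Rge_le in H. apply Rmult_le_compat_r with (r := c * d) in H; [|lra].
      unfold Rdiv in H. rewrite Rmult_assoc, Rinv_l, Rmult_1_r in H by lra. lra.
    - apply Rle_ge. apply Rmult_le_reg_r with (c * d). lra.
      unfold Rdiv. rewrite Rmult_assoc, Rinv_l by lra. lra. }
  rewrite Heq.
  assert (Hconc : concave_on_R G <-> concave_on_R (fun u => ln (sgm u * PS (acoef c d) (sgm u)))).
  { unfold concave_on_R. split; intros H x y t Ht; specialize (H x y t Ht).
    - rewrite !HG in H. exact H.
    - rewrite !HG. exact H. }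
  rewrite Hconc. split.
  - apply necessity; auto.
  - apply sufficiency; auto.
Qed.
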